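(* There exists a family of smooth functions $\{\varphi_t:[0,\frac{\pi}{2}]\to[0,1]\}_{t\in(0,1]}$, depending continuously on $t$, such that for each $t\in(0,1]$: (1) all even-order derivatives of $\varphi_t$ vanish at $0$, $\varphi_t'(0)=1$, all odd-order derivatives of $\varphi_t$ vanish at $\frac{\pi}{2}$, and $\varphi_t(\frac{\pi}{2})>0$; (2) $\varphi_t(r)\le 3t\sin(r)$ for all $r\in(t,\frac{\pi}{2}]$; (3) on $(0,\frac{\pi}{2})$, $$\frac{-\varphi_t''}{\varphi_t}\ \ge\ \tan\cdot\frac{\varphi_t'}{\varphi_t}\ \ge\ \max\{t,1-t\}.$$
   Context: Here $\tan\cdot\frac{\varphi_t'}{\varphi_t}$ denotes the function $r\mapsto\tan(r)\varphi_t'(r)/\varphi_t(r)$. *)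

(* Defs.v *)
From Stdlib Require Import Reals Lra.
From Coquelicot Require Import Coquelicot.
Open Scope R_scope.

(* A function on [0, PI/2] is smooth if it is the restriction of a C^oo
   function on R (equivalently, all one-sided derivatives exist and are
   continuous up to the boundary). *)
Definition smooth_R (f : R -> R) : Prop :=
  forall (n : nat) (x : R), ex_derive_n f n x.

(* The family t |-> phi t depends continuously on t in the C^oo topology
   on [0, PI/2]: every derivative (t, r) |-> phi_t^(k)(r) is jointly
   continuous on (0,1] x [0, PI/2]. *)
Definition family_continuous (phi : R -> R -> R) : Prop :=
  forall (k : nat) (t r : R), 0 < t <= 1 -> 0 <= r <= PI / 2 ->
  forall eps : R, 0 < eps -> exists delta : R, 0 < delta /\
    forall t' r' : R, 0 < t' <= 1 -> 0 <= r' <= PI / 2 ->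
      Rabs (t' - t) < delta -> Rabs (r' - r) < delta ->
      Rabs (Derive_n (phi t') k r' - Derive_n (phi t) k r) < eps.

(* Main.v *)
Require Import Defs.
From Stdlib Require Import Reals Lra.
From Coquelicot Require Import Coquelicot.
Open Scope R_scope.


Definition beta (t : R) := t * (1 - t) / 2.
Definition qq (t : R) := exp (3 * (/ t) ^ 2) * (/ sin t) ^ 2.
Definition Wf (t r : R) := / (1 + qq t * sin r ^ 2).
Definition Ef (t r : R) := exp (- beta t * ln (1 + qq t * sin r ^ 2)).

Inductive pex := Kc (c : R) | Kb | Kq | ES | EC | EW | EE | Ad (a b : pex) | Mu (a b : pex).

Fixpoint ev (e : pex) (t r : R) : R :=
  match e with
  | Kc c => c | Kb => beta t | Kq => qq t | ES => sin r | EC => cos r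
  | EW => Wf t r | EE => Ef t r
  | Ad a b => ev a t r + ev b t r
  | Mu a b => ev a t r * ev b t r
  end.

Fixpoint dv (e : pex) : pex :=
  match e with
  | Kc _ | Kb | Kq => Kc 0
  | ES => EC | EC => Mu (Kc (-1)) ES
  | EW => Mu (Kc (-2)) (Mu Kq (Mu ES (Mu EC (Mu EW EW))))
  | EE => Mu (Kc (-2)) (Mu Kb (Mu Kq (Mu ES (Mu EC (Mu EW EE)))))
  | Ad a b => Ad (dv a) (dv b)
  | Mu a b => Ad (Mu (dv a) b) (Mu a (dv b))
  end.

Lemma qq_nonneg t : 0 <= qq t.
Proof. unfold qq. apply Rmult_le_pos. left; apply exp_pos. apply pow2_ge_0. Qed.

Lemma den_pos t r : 0 < 1 + qq t * sin r ^ 2.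
Proof. pose proof (qq_nonneg t). pose proof (pow2_ge_0 (sin r)). nra. Qed.

Lemma dv_ok e t r : is_derive (fun r => ev e t r) r (ev (dv e) t r).
Proof.
  induction e; simpl.
  - auto_derive; auto.
  - auto_derive; auto.
  - auto_derive; auto.
  - auto_derive; auto; ring.
  - auto_derive; auto; ring.
  - unfold Wf. pose proof (den_pos t r). auto_derive. lra. field. lra.
  - unfold Ef, Wf. pose proof (den_pos t r). auto_derive. lra. replace (sin r * (sin r * 1)) with (sin r ^ 2) by ring. field. lra.
  - apply (is_derive_plus _ _ _ _ _ IHe1 IHe2).
  - apply (is_derive_mult _ _ _ _ _ IHe1 IHe2). intros; apply Rmult_comm.
Qed.

Lemma c1 (g : R -> R) (f : R * R -> R) x :
  continuous f x -> ex_derive g (f x) -> continuous (fun p => g (f p)) x.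
Proof. intros Hf Hg. apply (continuous_comp f g). exact Hf. exact (ex_derive_continuous (K:=R_AbsRing) (V:=R_NormedModule) g (f x) Hg). Qed.

Lemma cfst (g : R -> R) t r : ex_derive g t -> continuous (fun p : R * R => g (fst p)) (t, r).
Proof. intros. apply (c1 g fst). apply continuous_fst. exact H. Qed.

Lemma csnd (g : R -> R) t r : ex_derive g r -> continuous (fun p : R * R => g (snd p)) (t, r).
Proof. intros. apply (c1 g snd). apply continuous_snd. exact H. Qed.

Lemma cplus (f g : R * R -> R) x : continuous f x -> continuous g x -> continuous (fun p => f p + g p) x.
Proof. intros. apply (continuous_plus f g x H H0). Qed.

Lemma cmult (f g : R * R -> R) x : continuous f x -> continuous g x -> continuous (fun p => f p * g p) x.
Proof. intros. apply (continuous_mult f g x H H0). Qed.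

Lemma cconst (c : R) x : continuous (fun _ : R * R => c) x.
Proof. apply continuous_const. Qed.

Lemma cden t r : 0 < t <= 1 -> continuous (fun p : R * R => 1 + qq (fst p) * sin (snd p) ^ 2) (t, r).
Proof.
  intros Ht.
  assert (sin t <> 0). { apply Rgt_not_eq. apply sin_gt_0. lra. pose proof PI2_1. lra. }
  apply cplus. apply cconst. apply cmult.
  apply cfst. unfold qq. auto_derive. repeat split; auto; lra.
  apply (c1 (fun y => y ^ 2) (fun p => sin (snd p))). apply csnd. auto_derive; auto.
  auto_derive; auto.
Qed.

Lemma ev_cont e t r : 0 < t <= 1 -> continuous (fun p : R * R => ev e (fst p) (snd p)) (t, r).
Proof.
  intros Ht. induction e; simpl.
  - apply cconst.
  - apply cfst. unfold beta. auto_derive; auto.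
  - apply cfst. unfold qq.
    assert (sin t <> 0). { apply Rgt_not_eq. apply sin_gt_0. lra. pose proof PI2_1. lra. }
    auto_derive. repeat split; auto; lra.
  - apply csnd. auto_derive; auto.
  - apply csnd. auto_derive; auto.
  - unfold Wf. apply (c1 Rinv (fun p : R * R => 1 + qq (fst p) * sin (snd p) ^ 2)).
    apply cden; auto. simpl. pose proof (den_pos t r). auto_derive. lra.
  - unfold Ef. apply (c1 exp (fun p : R * R => - beta (fst p) * ln (1 + qq (fst p) * sin (snd p) ^ 2))).
    apply cmult. apply (cfst (fun x => - beta x)). unfold beta; auto_derive; auto.
    apply (c1 ln (fun p : R * R => 1 + qq (fst p) * sin (snd p) ^ 2)).
    apply cden; auto. simpl. pose proof (den_pos t r). auto_derive. lra.
    auto_derive; auto.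
  - apply cplus; auto.
  - apply cmult; auto.
Qed.

Lemma cont_ed (F : R -> R -> R) t r :
  continuous (fun p : R * R => F (fst p) (snd p)) (t, r) ->
  forall eps, 0 < eps -> exists delta, 0 < delta /\ forall t' r',
    Rabs (t' - t) < delta -> Rabs (r' - r) < delta -> Rabs (F t' r' - F t r) < eps.
Proof.
  intros H eps He.
  destruct (proj1 (filterlim_locally _ _) H (mkposreal eps He)) as [d Hd].
  exists d. split. apply cond_pos. intros t' r' H1 H2.
  apply (Hd (t', r')). split; simpl; exact H1 || exact H2.
Qed.

Lemma Dn_ev n e t r : Derive_n (ev e t) n r = ev (Nat.iter n dv e) t r.
Proof.
  revert r. induction n; intros r; simpl. reflexivity.
  rewrite (Derive_ext _ (fun r => ev (Nat.iter n dv e) t r)); [| exact IHn].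
  apply is_derive_unique. apply dv_ok.
Qed.

Lemma refl_sym (f : nat -> R -> R) c s :
  (forall n x, is_derive (f n) x (f (S n) x)) ->
  (forall x, f 0%nat (c - x) = s * f 0%nat x) ->
  forall n x, f n (c - x) = s * (-1) ^ n * f n x.
Proof.
  intros Hd H0 n. induction n; intros x. rewrite H0. simpl; ring.
  assert (Hl: is_derive (fun y => c - y) x (-1)) by (auto_derive; auto; ring).
  pose proof (is_derive_comp (f n) (fun y => c - y) x _ _ (Hd n (c - x)) Hl) as H2.
  apply is_derive_unique in H2.
  assert (H3 : is_derive (fun y => s * (-1) ^ n * f n y) x (s * (-1) ^ n * f (S n) x)).
  { apply is_derive_scal. apply Hd. }
  apply is_derive_unique in H3.
  rewrite (Derive_ext _ _ _ IHn) in H2. assert (E: scal (-1) (f (S n) (c - x)) = s * (-1) ^ n * f (S n) x) by (etransitivity; [symmetry; exact H2 | exact H3]). clear H2 H3. rename E into H3.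
  unfold scal in H3; simpl in H3; unfold mult in H3; simpl in H3.
  simpl. lra.
Qed.

Lemma exp_mono x y : x <= y -> exp x <= exp y.
Proof. intros H. destruct (Rle_lt_or_eq_dec x y H). left; apply exp_increasing; auto. subst; right; auto. Qed.

Lemma beta_nonneg t : 0 < t <= 1 -> 0 <= beta t <= 1/8.
Proof. intros. unfold beta. pose proof (pow2_ge_0 (t - 1/2)). split; nra. Qed.

Lemma ln_nonneg t r : 0 <= ln (1 + qq t * sin r ^ 2).
Proof.
  rewrite <- ln_1. apply ln_le. lra. pose proof (qq_nonneg t). pose proof (pow2_ge_0 (sin r)). nra.
Qed.

Lemma Ef_bounds t r : 0 < t <= 1 -> 0 < Ef t r <= 1.
Proof.
  intros Ht. unfold Ef. split. apply exp_pos. apply Rle_trans with (exp 0); [apply exp_mono | rewrite exp_0; lra].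
  destruct (beta_nonneg t Ht) as [Hb _]. pose proof (ln_nonneg t r). pose proof (Rmult_le_pos _ _ Hb H). lra.
Qed.

Lemma Ef_small t r : 0 < t < 1/3 -> t < r <= PI / 2 -> Ef t r <= 3 * t.
Proof.
  intros Ht Hr. pose proof PI2_1.
  assert (Hst : 0 < sin t) by (apply sin_gt_0; lra).
  assert (Hsr : sin t <= sin r) by (apply sin_incr_1; lra).
  assert (Hq : exp (3 * (/ t) ^ 2) <= qq t * sin r ^ 2).
  { unfold qq. replace (exp (3 * (/ t) ^ 2) * (/ sin t) ^ 2 * sin r ^ 2)
      with (exp (3 * (/ t) ^ 2) * (sin r / sin t) ^ 2) by (field; lra).
    assert (1 <= sin r / sin t).
    { apply (Rmult_le_reg_r (sin t)); auto. unfold Rdiv. rewrite Rmult_assoc, Rinv_l; lra. }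
    assert (1 <= (sin r / sin t) ^ 2) by nra.
    pose proof (exp_pos (3 * (/ t) ^ 2)). nra. }
  assert (HL : 3 * (/ t) ^ 2 <= ln (1 + qq t * sin r ^ 2)).
  { rewrite <- (ln_exp (3 * (/ t) ^ 2)). apply ln_le. apply exp_pos.
    pose proof (pow2_ge_0 (sin r)). lra. }
  assert (Hb : t / 3 <= beta t) by (unfold beta; nra).
  assert (Hit : t * / t = 1) by (field; lra).
  assert (Hit0 : 0 < / t) by (apply Rinv_0_lt_compat; lra).
  assert (HbL : / t <= beta t * ln (1 + qq t * sin r ^ 2)).
  { apply Rle_trans with (t / 3 * (3 * (/ t) ^ 2)).
    right. field. lra. apply Rmult_le_compat; try lra. pose proof (pow2_ge_0 (/t)); lra. }
  unfold Ef. apply Rle_trans with (exp (- / t)).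
  apply exp_mono. lra.
  assert (Hab : exp (- / t) * exp (/ t) = 1) by (rewrite <- exp_plus; replace (- / t + / t) with 0 by ring; apply exp_0).
  pose proof (exp_ineq1 (/ t) ltac:(lra)).
  pose proof (exp_pos (- / t)).
  assert (t * exp (/ t) > t + 1) by nra.
  nra.
Qed.

Definition phiE := Mu ES EE.

Lemma sym0 t : forall n x, ev (Nat.iter n dv phiE) t (0 - x) = -1 * (-1) ^ n * ev (Nat.iter n dv phiE) t x.
Proof.
  apply (refl_sym (fun n => ev (Nat.iter n dv phiE) t)).
  intros n x. apply dv_ok.
  intros x. simpl Nat.iter; unfold phiE; cbn [ev]. unfold Ef. replace (0 - x) with (- x) by ring.
  rewrite sin_neg. replace ((- sin x) ^ 2) with (sin x ^ 2) by ring. ring.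
Qed.

Lemma symPI t : forall n x, ev (Nat.iter n dv phiE) t (PI - x) = 1 * (-1) ^ n * ev (Nat.iter n dv phiE) t x.
Proof.
  apply (refl_sym (fun n => ev (Nat.iter n dv phiE) t)).
  intros n x. apply dv_ok.
  intros x. simpl Nat.iter; unfold phiE; cbn [ev]. unfold Ef. rewrite sin_PI_x. ring.
Qed.

Theorem lemma3p3 :
  exists phi : R -> R -> R,
    family_continuous phi /\
    forall t : R, 0 < t <= 1 ->
      smooth_R (phi t) /\
      (forall r : R, 0 <= r <= PI / 2 -> 0 <= phi t r <= 1) /\
      (* (1) boundary conditions *)
      (forall k : nat, Derive_n (phi t) (2 * k) 0 = 0) /\
      Derive_n (phi t) 1 0 = 1 /\
      (forall k : nat, Derive_n (phi t) (2 * k + 1) (PI / 2) = 0) /\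
      0 < phi t (PI / 2) /\
      (* (2) *)
      (forall r : R, t < r <= PI / 2 -> phi t r <= 3 * t * sin r) /\
      (* (3) *)
      (forall r : R, 0 < r < PI / 2 ->
         - Derive_n (phi t) 2 r / phi t r
           >= tan r * Derive_n (phi t) 1 r / phi t r /\
         tan r * Derive_n (phi t) 1 r / phi t r >= Rmax t (1 - t)).
Proof.
  exists (ev phiE). split.
  { intros k t r Ht Hr eps He.
    destruct (cont_ed (ev (Nat.iter k dv phiE)) t r (ev_cont _ t r Ht) eps He) as [d [Hd H]].
    exists d; split; auto. intros t' r' Ht' Hr' H1 H2. rewrite !Dn_ev. apply H; auto. }
  intros t Ht. pose proof PI2_1.
  split; [| split; [| split; [| split; [| split; [| split; [| split]]]]]].
  - intros n x. destruct n. exact I. simpl.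
    apply (ex_derive_ext (fun r => ev (Nat.iter n dv phiE) t r)).
    intros r; symmetry; exact (Dn_ev n phiE t r). eexists; apply dv_ok.
  - intros r Hr. cbn [ev phiE]. pose proof (Ef_bounds t r Ht).
    assert (0 <= sin r) by (apply sin_ge_0; lra). pose proof (SIN_bound r). nra.
  - intros k. rewrite Dn_ev. pose proof (sym0 t (2 * k) 0) as H0.
    replace (0 - 0) with 0 in H0 by ring. rewrite pow_mult in H0.
    replace ((-1) ^ 2) with 1 in H0 by ring. rewrite pow1 in H0. lra.
  - rewrite Dn_ev. simpl Nat.iter; unfold phiE; cbn [ev dv]. rewrite sin_0, cos_0. unfold Ef.
    rewrite !sin_0. replace (1 + qq t * 0 ^ 2) with 1 by ring. rewrite ln_1.
    replace (- beta t * 0) with 0 by ring. rewrite exp_0. ring.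
  - intros k. rewrite Dn_ev. pose proof (symPI t (2 * k + 1) (PI / 2)) as H0.
    replace (PI - PI / 2) with (PI / 2) in H0 by field. rewrite pow_add, pow_mult in H0.
    replace ((-1) ^ 2) with 1 in H0 by ring. rewrite pow1 in H0. lra.
  - cbn [ev phiE]. rewrite sin_PI2. pose proof (Ef_bounds t (PI / 2) Ht). lra.
  - intros r Hr. cbn [ev phiE].
    assert (0 <= sin r) by (apply sin_ge_0; lra).
    destruct (Rlt_or_le t (1/3)).
    + pose proof (Ef_small t r ltac:(lra) Hr). nra.
    + pose proof (Ef_bounds t r Ht). nra.
  - intros r Hr. rewrite !Dn_ev. simpl Nat.iter; unfold phiE; cbn [ev dv].
    assert (HS : 0 < sin r) by (apply sin_gt_0; lra).
    assert (HC : 0 < cos r) by (apply cos_gt_0; lra).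
    pose proof (Ef_bounds t r Ht) as HE.
    pose proof (beta_nonneg t Ht) as Hb.
    pose proof (qq_nonneg t) as Hq.
    pose proof (den_pos t r) as Hd.
    unfold tan, Wf.
    set (E := Ef t r) in *. set (S := sin r) in *. set (C := cos r) in *.
    set (q := qq t) in *. set (b := beta t) in *.
    split.
    + assert (Hpos : 0 <= 2 * b * q * C ^ 2 * (/ (1 + q * S ^ 2)) ^ 2 * (3 + (1 - 2 * b) * q * S ^ 2)).
      { pose proof (pow2_ge_0 S). pose proof (pow2_ge_0 C). pose proof (pow2_ge_0 (/ (1 + q * S ^ 2))).
        assert (0 <= (1 - 2 * b) * q * S ^ 2).
        { apply Rmult_le_pos. apply Rmult_le_pos. lra. lra. assumption. }
        apply Rmult_le_pos; [|lra].
        apply Rmult_le_pos; [|assumption].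
        apply Rmult_le_pos; [|assumption].
        apply Rmult_le_pos; lra. }
      match goal with |- ?A >= ?B =>
        assert (K : A - B = 2 * b * q * C ^ 2 * (/ (1 + q * S ^ 2)) ^ 2 * (3 + (1 - 2 * b) * q * S ^ 2))
        end.
      { field. repeat split; intro; lra. }
      apply Rminus_ge. rewrite K. apply Rle_ge. exact Hpos.
    + match goal with |- ?A >= _ =>
        assert (K : A = 1 - 2 * b * (q * S ^ 2 * / (1 + q * S ^ 2)))
        by (field; repeat split; intro; lra) end.
      rewrite K.
      assert (0 <= q * S ^ 2 * / (1 + q * S ^ 2) <= 1).
      { pose proof (pow2_ge_0 S). split.
        apply Rmult_le_pos. nra. left; apply Rinv_0_lt_compat; lra.
        apply (Rmult_le_reg_r (1 + q * S ^ 2)); auto.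
        rewrite Rmult_assoc, Rinv_l; lra. }
      assert (b = t * (1 - t) / 2) by reflexivity.
      apply Rle_ge. apply Rmax_lub; nra.
Qed.
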